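(* Let $d\ge 2$ be even. If $G$ is a $d$-regular graph, then $\alpha_{\mathrm{od}}(G)\le\frac{d-1}{2d-1}|G|$. This bound is tight: for every even $d\ge2$ and every integer $t\ge1$ there is a connected $d$-regular graph $G$ of order $n=t(2d-1)$ with $\alpha_{\mathrm{od}}(G)=\frac{d-1}{2d-1}n$; moreover, for every even $d\ge 2$ there is a $d$-regular bipartite graph attaining equality.
   Context: An odd independent set in $G=(V,E)$ is an independent set $S$ such that every $v\in V\setminus S$ has either no neighbor or an odd number of neighbors in $S$; $\alpha_{\mathrm{od}}(G)$ is its maximum size; $|G|$ is the number of vertices. *)

(* Defs.v *)
From mathcomp Require Import all_boot.
Set Implicit Arguments. Unset Strict Implicit. Unset Printing Implicit Defensive.

Definition simple_graph (T : finType) (e : rel T) : Prop :=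
  symmetric e /\ irreflexive e.

Definition nbhd (T : finType) (e : rel T) (v : T) : {set T} := [set u | e v u].
Definition deg (T : finType) (e : rel T) (v : T) : nat := #|nbhd e v|.

Definition regular (T : finType) (e : rel T) (d : nat) : Prop :=
  forall v : T, deg e v = d.

Definition independent (T : finType) (e : rel T) (S : {set T}) : bool :=
  [forall x in S, forall y in S, ~~ e x y].

Definition odd_independent (T : finType) (e : rel T) (S : {set T}) : bool :=
  independent e S &&
  [forall v in ~: S, (#|nbhd e v :&: S| == 0) || odd #|nbhd e v :&: S|].

(* alpha_od(G): maximum size of an odd independent set (set0 always is one). *)
Definition alpha_od (T : finType) (e : rel T) : nat :=
  \max_(S : {set T} | odd_independent e S) #|S|.

Definition connected_graph (T : finType) (e : rel T) : Prop :=
  forall x y : T, connect e x y.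

Definition bipartite (T : finType) (e : rel T) : Prop :=
  exists A : {set T}, forall x y : T, e x y -> (x \in A) != (y \in A).

(* Main.v *)
Require Import Defs.
From mathcomp Require Import all_boot zify.


Lemma sum_in_card (T : finType) (A : {set T}) : \sum_(u : T) ((u \in A) : nat) = #|A|.
Proof. by rewrite -sum1_card [RHS]big_mkcond /=; apply: eq_bigr => u _; case: (u \in A). Qed.

Lemma part1 (d : nat) (d_ge2 : 2 <= d) (d_even : ~~ odd d) (T : finType) (e : rel T) :
  simple_graph e -> regular e d ->
  forall S : {set T}, odd_independent e S -> #|S| * (2 * d - 1) <= (d - 1) * #|T|.
Proof.
move=> [sym irr] reg S /andP[/forallP ind /forallP oddc].
pose F (v u : T) : nat := [&& v \in S, u \notin S & e v u].
have H1 : \sum_(v : T) \sum_(u : T) F v u = d * #|S|.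
  rewrite -sum_in_card big_distrr /=; apply: eq_bigr => v _.
  case vS: (v \in S); last by rewrite muln0 big1 // => u _; rewrite /F vS.
  rewrite muln1 -(reg v) /deg -sum_in_card; apply: eq_bigr => u _.
  rewrite /F vS /nbhd inE /=; case evu: (e v u); rewrite ?andbF ?andbT //.
  case uS: (u \in S) => //.
  by have := ind v; rewrite vS /= => /forallP /(_ u); rewrite uS evu.
have H2 : \sum_(u : T) \sum_(v : T) F v u <= (d - 1) * #|~: S|.
  rewrite -sum_in_card big_distrr /=; apply: leq_sum => u _.
  case uS: (u \in ~: S); last first.
    by rewrite big1 // => v _; rewrite /F; move: uS; rewrite inE; case: (u \in S) => //; rewrite andbF.
  rewrite muln1.
  have -> : \sum_(v : T) F v u = #|nbhd e u :&: S|.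
    rewrite -sum_in_card; apply: eq_bigr => v _.
    rewrite /F !inE /nbhd; move: uS; rewrite inE => -> /=; rewrite (sym u v) andbC //.
  have hle : #|nbhd e u :&: S| <= d by rewrite -(reg u) /deg; apply/subset_leq_card/subsetIl.
  have := oddc u; rewrite uS /= => /orP [/eqP -> | hodd]; first by lia.
  have : #|nbhd e u :&: S| != d by apply/eqP => E; move: hodd; rewrite E (negbTE d_even).
  lia.
rewrite exchange_big H1 in H2.
have hc := cardsC S.
nia.
Qed.


Lemma transport (T1 T2 : finType) (f : T1 -> T2) (g : T2 -> T1)
  (fK : cancel f g) (gK : cancel g f) (e2 : rel T2) d :
  let e1 := [rel x y | e2 (f x) (f y)] in
  (simple_graph e2 -> simple_graph e1) /\
  (regular e2 d -> regular e1 d) /\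
  (connected_graph e2 -> connected_graph e1) /\
  (bipartite e2 -> bipartite e1) /\
  (forall S : {set T2}, odd_independent e2 S ->
     odd_independent e1 (f @^-1: S) /\ #|f @^-1: S| = #|S|).
Proof.
move=> e1.
have bij : bijective f by exists g.
have cardP (R : {set T2}) : #|f @^-1: R| = #|R| by apply: on_card_preimset; apply: onW_bij.
have nb x : nbhd e1 x = f @^-1: nbhd e2 (f x) by apply/setP => y; rewrite !inE.
split; first by move=> [s i]; split => [x y|x] /=; [apply: s | apply: i].
split; first by move=> r x; rewrite /deg nb cardP; apply: r.
split.
  move=> c x y.
  have gen a b : connect e2 a b -> connect e1 (g a) (g b).
    move/connectP => [p pth ->] {b}.
    elim: p a pth => [|c' p IH] a /=; first by rewrite connect0.
    move=> /andP[eac pth]; apply: connect_trans (IH _ pth).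
    by apply: connect1; rewrite /= !gK.
  by have := gen _ _ (c (f x) (f y)); rewrite !fK.
split.
  by move=> [A HA]; exists (f @^-1: A) => x y exy; rewrite !inE; apply: HA.
move=> S /andP[/forallP ind /forallP oc]; split; last exact: cardP.
apply/andP; split.
  apply/forallP => x; apply/implyP; rewrite inE => xS.
  apply/forallP => y; apply/implyP; rewrite inE => yS /=.
  by have := ind (f x); rewrite xS /= => /forallP/(_ (f y)); rewrite yS.
apply/forallP => v; apply/implyP; rewrite !inE => vS.
by rewrite nb -preimsetI cardP; have := oc (f v); rewrite inE vS.
Qed.
Set Implicit Arguments. Unset Strict Implicit. Unset Printing Implicit Defensive.

Notation VT t d := ('I_t.+1 * 'I_d.+1 + 'I_t.+1 * 'I_d.+2)%type.

Definition mm {t d} (p : 'I_t.+1 * 'I_d.+2) : 'I_t.+1 * 'I_d.+2 :=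
  (if odd p.2 then ordS p.1 else ord_pred p.1, rev_ord p.2).

Definition eV t d : rel (VT t d) := fun x y =>
  match x, y with
  | inl p, inr q => p.1 == q.1
  | inr q, inl p => p.1 == q.1
  | inr p, inr q => mm p == q
  | inl _, inl _ => false
  end.

Lemma odd_rev d (dev : ~~ odd d) (b : 'I_d.+2) : odd (rev_ord b) = ~~ odd b.
Proof.
rewrite /= subSS oddB; last by rewrite -ltnS.
by rewrite /= dev.
Qed.

Lemma mmK t d (dev : ~~ odd d) : involutive (@mm t d).
Proof.
move=> [i b]; rewrite /mm /= odd_rev // rev_ordK.
by case: (odd b) => /=; rewrite ?ordSK ?ord_predK.
Qed.

Lemma mm_neq t d (dev : ~~ odd d) p : mm p != p :> 'I_t.+1 * 'I_d.+2.
Proof.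
case: p => i b; rewrite /mm /=; apply/negP => /eqP [_ E].
by have := odd_rev dev b; rewrite E; case: (odd b).
Qed.

Lemma eV_simple t d (dev : ~~ odd d) : simple_graph (@eV t d).
Proof.
split.
  move=> [p|p] [q|q] //=.
  apply/eqP/eqP => <-; by rewrite mmK.
by move=> [p|p] //=; apply/negbTE/mm_neq.
Qed.

Lemma eV_regular t d (dev : ~~ odd d) : regular (@eV t d) d.+2.
Proof.
move=> [[i j]|[i b]]; rewrite /deg.
  have -> : nbhd (@eV t d) (inl (i, j)) = [set inr (i, b) | b : 'I_d.+2].
    apply/setP => [[p|[i' b]]]; rewrite inE /=.
      by apply/esym/negbTE/imsetP => -[x _].
    apply/eqP/imsetP => [<-|[x _ [-> _]]] //; by exists b.
  by rewrite card_imset ?cardsT ?card_ord // => x y [].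
have -> : nbhd (@eV t d) (inr (i, b)) = inr (mm (i, b)) |: [set inl (i, j) | j : 'I_d.+1].
  apply/setP => [[[i' j]|q]]; rewrite !inE /=.
    apply/eqP/imsetP => [->|[x _ [-> _]]] //; by exists j.
  have -> : (inr q \in [set inl (i, j) | j : 'I_d.+1]) = false.
    by apply/negbTE/imsetP => -[x _].
  by rewrite orbF eq_sym.
rewrite cardsU1 card_imset ?cardsT ?card_ord; last by move=> x y [].
rewrite (_ : (_ \notin _) = true) //.
by apply/imsetP => -[x _].
Qed.

Definition SV t d : {set VT t d} := [set x | is_inl x].

Lemma SV_card t d : #|SV t d| = t.+1 * d.+1.
Proof.
rewrite (_ : SV t d = inl @: setT); last first.
  apply/setP => [[p|p]]; rewrite !inE /=.
    by apply/esym/imsetP; exists p.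
  by apply/esym/negbTE/imsetP => -[x _].
by rewrite card_imset ?cardsT ?card_prod ?card_ord // => x y [].
Qed.

Lemma SV_oi t d (dev : ~~ odd d) : odd_independent (@eV t d) (SV t d).
Proof.
apply/andP; split.
  apply/forallP => x; apply/implyP; rewrite inE => hx.
  apply/forallP => y; apply/implyP; rewrite inE => hy.
  by case: x hx => // ? _; case: y hy.
apply/forallP => v; apply/implyP; rewrite !inE.
case: v => // -[i b] _.
have -> : nbhd (@eV t d) (inr (i, b)) :&: SV t d = [set inl (i, j) | j : 'I_d.+1].
  apply/setP => [[[i' j]|q]]; rewrite !inE /=.
    rewrite andbT; apply/eqP/imsetP => [->|[x _ [-> _]]] //; by exists j.
  rewrite andbF; apply/esym/negP => /imsetP [x _ E] //.
rewrite card_imset; last by move=> x y [].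
by rewrite card_ord /= dev.
Qed.

Lemma eV_connected t d (dev : ~~ odd d) : connected_graph (@eV t d).
Proof.
have [sym _] := eV_simple t dev.
have csym := sym_connect_sym sym.
pose s (i : 'I_t.+1) : VT t d := inl (i, ord0).
pose blk (v : VT t d) := match v with inl p => p.1 | inr p => p.1 end.
have A v : connect (@eV t d) v (s (blk v)).
  case: v => [[i j]|[i b]] /=.
    apply: (@connect_trans _ _ (inr (i, ord0))); apply: connect1 => //=.
  by apply: connect1; rewrite /= eqxx.
pose b1 : 'I_d.+2 := Ordinal (isT : 1 < d.+2).
have B i : connect (@eV t d) (s i) (s (ordS i)).
  apply: (@connect_trans _ _ (inr (i, b1))); first by apply: connect1; rewrite /= eqxx.
  apply: (@connect_trans _ _ (inr (ordS i, rev_ord b1))); last by apply: connect1; rewrite /= eqxx.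
  by apply: connect1; rewrite /= /mm /=.
have C k : forall i : 'I_t.+1, val i = k -> connect (@eV t d) (s ord0) (s i).
  elim: k => [|k IH] i hi.
    by rewrite (_ : i = ord0) //; apply: val_inj.
  have hk : k < t.+1 by case: i hi => m /= hm hmk; lia.
  apply: connect_trans (IH (Ordinal hk) erefl) _.
  rewrite (_ : i = ordS (Ordinal hk)); first exact: B.
  apply: val_inj; rewrite /= modn_small -?hi //=; case: i hi => m /= hm hmk; lia.
have E v : connect (@eV t d) (s ord0) v.
  apply: connect_trans (C _ (blk v) erefl) _.
  by rewrite csym; exact: A.
move=> x y.
apply: connect_trans (E y).
by rewrite csym; exact: E.
Qed.

Lemma eV_bipartite d (dev : ~~ odd d) : bipartite (@eV 1 d).
Proof.
exists [set v | match v with inl p => p.1 == ord0 | inr p => p.1 != ord0 end].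
move=> [[i j]|[i b]] [[i' j']|[i' b']] //=; rewrite !inE /=.
- by move/eqP => <-; case: (i == ord0).
- by move/eqP => ->; case: (i == ord0).
rewrite /mm /= => /eqP [<- _].
by case: (odd b) => /=; case: i => -[|[|]] //.
Qed.

Lemma VT_card t d : #|{: VT t d}| = t.+1 * d.+1 + t.+1 * d.+2.
Proof. by rewrite card_sum !card_prod !card_ord. Qed.

Lemma alpha_bound (d : nat) (d_ge2 : 2 <= d) (d_even : ~~ odd d) (T : finType) (e : rel T) :
  simple_graph e -> regular e d -> alpha_od e * (2 * d - 1) <= (d - 1) * #|T|.
Proof.
move=> sg rg; rewrite /alpha_od.
apply: (big_ind (fun x => x * (2 * d - 1) <= (d - 1) * #|T|)) => //.
  by move=> x y hx hy; case: (leqP x y) => h; [rewrite (maxn_idPr h) | rewrite (maxn_idPl (ltnW h))] || nia.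
by move=> S; apply: part1.
Qed.

Lemma iso_ord (V : finType) n (H : n = #|{: V}|) :
  exists f : 'I_n -> V, exists g, cancel f g /\ cancel g f.
Proof.
exists (fun x => enum_val (cast_ord H x)), (fun v => cast_ord (esym H) (enum_rank v)).
by split => x; rewrite ?enum_valK ?cast_ordK ?cast_ordKV ?enum_rankK.
Qed.

Lemma build t d (dev : ~~ odd d) n (H : n = #|{: VT t d}|) :
  exists e : rel 'I_n,
    [/\ simple_graph e, regular e d.+2, connected_graph e,
        (t = 1 -> bipartite e) &
        alpha_od e * (2 * d.+2 - 1) = (d.+2 - 1) * n].
Proof.
have [f [g [fK gK]]] := iso_ord H.
have [Hs [Hr [Hc [Hb Ho]]]] := @transport _ _ f g fK gK (@eV t d) d.+2.
have [oi cS] := Ho _ (SV_oi t dev).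
exists [rel x y | @eV t d (f x) (f y)]; split.
- exact: Hs (eV_simple t dev).
- exact: Hr (@eV_regular t d dev).
- exact: Hc (@eV_connected t d dev).
- by move=> t0; subst t; apply: Hb (eV_bipartite dev).
have dev2 : ~~ odd d.+2 by rewrite /= !negbK.
have ub := @alpha_bound d.+2 isT dev2 _ _ (Hs (eV_simple t dev)) (Hr (@eV_regular t d dev)).
have lb : #|f @^-1: SV t d| <= alpha_od [rel x y | @eV t d (f x) (f y)].
  exact: (@leq_bigmax_cond _ _ (fun S : {set 'I_n} => #|S|) _ oi).
rewrite cS SV_card in lb.
rewrite card_ord in ub.
have Hn : n = t.+1 * d.+1 + t.+1 * d.+2 by rewrite H VT_card.
apply/eqP; rewrite eqn_leq ub /=.
nia.
Qed.

Theorem proposition3 (d : nat) (d_ge2 : 2 <= d) (d_even : ~~ odd d) :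
  (forall (T : finType) (e : rel T),
      simple_graph e -> regular e d ->
      alpha_od e * (2 * d - 1) <= (d - 1) * #|T|)
  /\
  (forall t : nat, 1 <= t ->
     exists e : rel 'I_(t * (2 * d - 1)),
       [/\ simple_graph e, regular e d, connected_graph e &
           alpha_od e * (2 * d - 1) = (d - 1) * (t * (2 * d - 1))])
  /\
  (exists n : nat, 0 < n /\
     exists e : rel 'I_n,
       [/\ simple_graph e, regular e d, bipartite e &
           alpha_od e * (2 * d - 1) = (d - 1) * n]).
Proof.
split; first by move=> T e; apply: alpha_bound.
have [d' Ed] : exists d', d = d'.+2 by exists (d - 2); lia.
subst d.
have dev : ~~ odd d' by move: d_even; rewrite /= !negbK.
split.
  move=> [//|t'] _.
  have H : t'.+1 * (2 * d'.+2 - 1) = #|{: VT t' d'}| by rewrite VT_card; lia.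
  have [e [? ? ? _ ?]] := build dev H.
  by exists e; split.
exists (2 * (2 * d'.+2 - 1)); split; first lia.
have H : 2 * (2 * d'.+2 - 1) = #|{: VT 1 d'}| by rewrite VT_card; lia.
have [e [? ? ? hb ?]] := build dev H.
by exists e; split => //; apply: hb.
Qed.
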